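(* Let $\mathcal T$ be a mesh of $\Omega$ as described in the context, with degrees $\mathbf p$. Then $\mathcal T$ is abstractly analysis-suitable (AAS) if and only if $\mathcal T$ is strongly dual-compatible (SDC).
   Context: Fix an integer $d\ge 2$, integers $N_1,\dots,N_d\ge 1$, polynomial degrees $\mathbf p=(p_1,\dots,p_d)\in\mathbb N^d$, and put $q_k=\lfloor (p_k+1)/2\rfloor$. Let $\Omega=\prod_{k=1}^d(0,N_k)$ and let $\mathrm{AR}=\prod_{k=1}^d[q_k,N_k-q_k]$ be the active region. A mesh $\mathcal T$ is a finite family of pairwise disjoint sets $E=E_1\times\cdots\times E_d$ (entities) whose union is $\overline\Omega$, where each $E_k$ is either a singleton $\{n\}$ with $n\in\{0,\dots,N_k\}$ or an open interval $(a,b)$ with integers $0\le a<b\le N_k$; entities all of whose components are open intervals are cells. Only meshes arising as follows are considered: start from a tensor-product mesh given by integer grids $0=g^k_0<\dots<g^k_{M_k}=N_k$ (entities: all products of grid points $\{g^k_r\}$ and open grid intervals $(g^k_r,g^k_{r+1})$), each grid containing $0,\dots,q_k$ and $N_k-q_k,\dots,N_k$, and apply finitely many subdivision steps. A subdivision step $\mathrm{subdiv}(\mathcal T,Q,j)$, for a cell $Q\subset\mathrm{AR}$ and direction $j$ such that $m=\frac12(\inf Q_j+\sup Q_j)$ is an integer, is: let $D=\overline Q$; for every $\ell\neq j$, if $\min D_\ell=q_\ell$ replace $D_\ell$ by $D_\ell\cup[0,q_\ell]$, and if $\max D_\ell=N_\ell-q_\ell$ replace $D_\ell$ by $D_\ell\cup[N_\ell-q_\ell,N_\ell]$;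 then replace every entity $E\subset D$ with $E_j=Q_j$ by the three entities obtained from $E$ by replacing its $j$-th component by $(\inf Q_j,m)$, $\{m\}$, $(m,\sup Q_j)$ respectively. For a product set $E$, a direction $j$ and an integer $n$, $P_{j,n}(E)$ is $E$ with its $j$-th component replaced by $\{n\}$. The slice is $S_j(n)=\{x\in\overline\Omega: x_j=n\}$. The $j$-orthogonal skeleton is the closed set $\mathrm{Sk}_j=\bigcup_{Q\text{ cell}}\{x\in\overline Q: x_j\in\{\inf Q_j,\sup Q_j\}\}$. Anchors: let $\kappa=\{\ell: p_\ell\text{ odd}\}$. For a cell $Q$ consider the sets $A=A_1\times\dots\times A_d$ with $A_\ell=\{n_\ell\}$, $n_\ell\in\{\inf Q_\ell,\sup Q_\ell\}$, for $\ell\in\kappa$ and $A_\ell=Q_\ell$ for $\ell\notin\kappa$; the set $\mathcal A$ of anchors consists of all such sets (over all cells) that are contained in $\mathrm{AR}$. For a product set $E$ and direction $j$, the global knot vector $\Xi^j_E$ is the increasing sequence of all integers $n$ with $P_{j,n}(E)\subseteq \mathrm{Sk}_j$. For an anchor $A$, the local knot vector $v^j_A=(\ell_0,\dots,\ell_{p_j+1})$ consists of $p_j+2$ consecutive entries of $\Xi^j_A$ with $\ell_{\lfloor (p_j+1)/2\rfloor}=\inf A_j$. Knot vectors are ordered lists; ''$n\in v$'' means $n$ is an entry of $v$; $\mathrm{conv}\,v$ is the closed interval from the first to the last entry. The index support of the T-spline $B_A$ of $A$ is $\mathrm{supp}_\Omega B_A=\prod_{k=1}^d\mathrm{conv}\,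 v^k_A$. Abstract T-junction extensions: for $j\in\{1,\dots,d\}$, $n\in\{0,\dots,N_j\}$, $\mathrm{ATJ}_j(n)=S_j(n)\cap\bigcup_{A\in\mathcal A,\, n\in\Xi^j_A}\mathrm{supp}_\Omega B_A\cap\bigcup_{A\in\mathcal A,\, n\notin\Xi^j_A}\mathrm{supp}_\Omega B_A$. The mesh is AAS if $\mathrm{ATJ}_i(n)\cap\mathrm{ATJ}_j(m)=\emptyset$ for all $i\ne j$ and all $n\in\{0,\dots,N_i\}$, $m\in\{0,\dots,N_j\}$. Overlap: two non-decreasing finite sequences $\Xi^{(1)}=(\xi^{(1)}_1,\dots,\xi^{(1)}_{n_1})$, $\Xi^{(2)}=(\xi^{(2)}_1,\dots,\xi^{(2)}_{n_2})$ overlap, written $\Xi^{(1)}\bowtie\Xi^{(2)}$, if there is a non-decreasing sequence $(\xi_1,\dots,\xi_n)$ with $n\ge\max(n_1,n_2)$ and integers $k^{(1)},k^{(2)}\ge 0$ with $\xi^{(1)}_r=\xi_{r+k^{(1)}}$ for $r=1,\dots,n_1$ and $\xi^{(2)}_r=\xi_{r+k^{(2)}}$ for $r=1,\dots,n_2$. The mesh is SDC if for any two distinct anchors $A^{(1)}\ne A^{(2)}$, either $\mathrm{supp}_\Omega B_{A^{(1)}}\cap\mathrm{supp}_\Omega B_{A^{(2)}}=\emptyset$ or $v^k_{A^{(1)}}\bowtie v^k_{A^{(2)}}$ holds for at least $d-1$ directions $k$. *)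

(* Defs.v *)
From Stdlib Require Import ZArith Reals.
From mathcomp Require Import all_boot.

Set Implicit Arguments.
Unset Strict Implicit.
Unset Printing Implicit Defensive.

Inductive comp : Type := Pt (n : Z) | Iv (a b : Z).

Definition cinf (c : comp) : Z := match c with Pt n => n | Iv a _ => a end.
Definition csup (c : comp) : Z := match c with Pt n => n | Iv _ b => b end.

Definition compS (c : comp) (x : R) : Prop :=
  match c with Pt n => x = IZR n | Iv a b => (Rlt (IZR a) (x) /\ Rlt (x) (IZR b)) end.
Definition compCl (c : comp) (x : R) : Prop :=
  match c with Pt n => x = IZR n | Iv a b => (Rle (IZR a) (x) /\ Rle (x) (IZR b)) end.

Section Defs.
Variable d : nat.

Definition point := 'I_d -> R.
Definition entity := 'I_d -> comp.
Definition mesh := entity -> Prop.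

Definition pset_sub (P Q : point -> Prop) : Prop := forall x, P x -> Q x.

Definition entS (E : entity) (x : point) : Prop := forall k, compS (E k) (x k).
Definition entCl (E : entity) (x : point) : Prop := forall k, compCl (E k) (x k).

Definition is_cell (E : entity) : Prop := forall k, exists a b, E k = Iv a b.

Variables (N : 'I_d -> Z) (p : 'I_d -> nat).

Definition qn (k : 'I_d) : nat := (p k + 1) %/ 2.
Definition qz (k : 'I_d) : Z := Z.of_nat (qn k).

Definition OmegaCl (x : point) : Prop :=
  forall k, (Rle (0) (x k) /\ Rle (x k) (IZR (N k))).
Definition AR (x : point) : Prop :=
  forall k, (Rle (IZR (qz k)) (x k) /\ Rle (x k) (IZR (N k - qz k))).

Definition grid_ok (G : 'I_d -> Z -> Prop) : Prop :=
  forall k,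
    (forall n, G k n -> ((0 <= n)%Z /\ (n <= N k)%Z)) /\ G k 0%Z /\ G k (N k) /\
    (forall n, ((0 <= n)%Z /\ (n <= qz k)%Z) -> G k n) /\
    (forall n, ((N k - qz k <= n)%Z /\ (n <= N k)%Z) -> G k n).

Definition tensor_mesh (G : 'I_d -> Z -> Prop) : mesh := fun E =>
  forall k, match E k with
            | Pt n => G k n
            | Iv a b => G k a /\ G k b /\ (a < b)%Z /\
                        (forall n, ((a < n)%Z /\ (n < b)%Z) -> ~ G k n)
            end.

Definition subdivD (Q : entity) (j : 'I_d) (x : point) : Prop :=
  forall l, if l == j then compCl (Q j) (x j)
            else compCl (Q l) (x l)
                 \/ (cinf (Q l) = qz l /\ (Rle (0) (x l) /\ Rle (x l) (IZR (qz l))))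
                 \/ (csup (Q l) = (N l - qz l)%Z /\
                     (Rle (IZR (N l - qz l)) (x l) /\ Rle (x l) (IZR (N l)))).

Definition subdiv (T : mesh) (Q : entity) (j : 'I_d) : mesh := fun E' =>
  let a := cinf (Q j) in let b := csup (Q j) in let m := ((a + b) / 2)%Z in
  (T E' /\ ~ (pset_sub (entS E') (subdivD Q j) /\ E' j = Q j)) \/
  (exists E, T E /\ pset_sub (entS E) (subdivD Q j) /\ E j = Q j /\
     (forall k, k != j -> E' k = E k) /\
     (E' j = Iv a m \/ E' j = Pt m \/ E' j = Iv m b)).

Inductive admissible : mesh -> Prop :=
| adm_tensor G : grid_ok G -> admissible (tensor_mesh G)
| adm_subdiv T Q j :
    admissible T -> T Q -> is_cell Q -> pset_sub (entS Q) AR ->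
    Z.even (cinf (Q j) + csup (Q j)) = true ->
    admissible (subdiv T Q j).

Variable T : mesh.

Definition Sk (j : 'I_d) (x : point) : Prop :=
  exists Q, T Q /\ is_cell Q /\ entCl Q x /\
            (x j = IZR (cinf (Q j)) \/ x j = IZR (csup (Q j))).

Definition is_anchor (A : entity) : Prop :=
  (exists Q, T Q /\ is_cell Q /\
     forall l, if odd (p l) then A l = Pt (cinf (Q l)) \/ A l = Pt (csup (Q l))
               else A l = Q l) /\
  pset_sub (entS A) AR.

Definition Pjn (E : entity) (j : 'I_d) (n : Z) : entity :=
  fun k => if k == j then Pt n else E k.

(* n is an entry of the global knot vector Xi^j_E *)
Definition inXi (j : 'I_d) (E : entity) (n : Z) : Prop :=
  pset_sub (entS (Pjn E j n)) (Sk j).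

(* v is the local knot vector v^j_A: p_j+2 consecutive entries of Xi^j_A
   with entry number floor((p_j+1)/2) (0-based) equal to inf A_j *)
Definition lkv (j : 'I_d) (A : entity) (v : seq Z) : Prop :=
  size v = (p j + 2)%nat /\
  (forall i, (i.+1 < size v)%nat -> (nth 0%Z v i < nth 0%Z v i.+1)%Z) /\
  (forall i, (i < size v)%nat -> inXi j A (nth 0%Z v i)) /\
  (forall i, (i.+1 < size v)%nat -> forall n,
      ((nth 0%Z v i < n)%Z /\ (n < nth 0%Z v i.+1)%Z) -> ~ inXi j A n) /\
  nth 0%Z v (qn j) = cinf (A j).

(* index support of B_A: product of the convex hulls of the local knot vectors *)
Definition supp (A : entity) (x : point) : Prop :=
  forall k, exists v, lkv k A v /\
    (Rle (IZR (nth 0%Z v 0)) (x k) /\ Rle (x k) (IZR (nth 0%Z v (size v).-1))).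

Definition ATJ (j : 'I_d) (n : Z) (x : point) : Prop :=
  (OmegaCl x /\ x j = IZR n) /\
  (exists A, is_anchor A /\ inXi j A n /\ supp A x) /\
  (exists A, is_anchor A /\ ~ inXi j A n /\ supp A x).

Definition AAS : Prop :=
  forall i j : 'I_d, i != j ->
  forall n m : Z, ((0 <= n)%Z /\ (n <= N i)%Z) -> ((0 <= m)%Z /\ (m <= N j)%Z) ->
  forall x, ~ (ATJ i n x /\ ATJ j m x).

End Defs.

Definition nondecr (s : seq Z) : Prop :=
  forall i, (i.+1 < size s)%nat -> (nth 0%Z s i <= nth 0%Z s i.+1)%Z.

Definition overlap (s1 s2 : seq Z) : Prop :=
  exists (xi : seq Z) (k1 k2 : nat),
    nondecr xi /\ (maxn (size s1) (size s2) <= size xi)%nat /\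
    (k1 + size s1 <= size xi)%nat /\ (k2 + size s2 <= size xi)%nat /\
    (forall r, (r < size s1)%nat -> nth 0%Z s1 r = nth 0%Z xi (r + k1)) /\
    (forall r, (r < size s2)%nat -> nth 0%Z s2 r = nth 0%Z xi (r + k2)).

Definition SDC (d : nat) (N : 'I_d -> Z) (p : 'I_d -> nat) (T : mesh d) : Prop :=
  forall A1 A2 : entity d,
    is_anchor N p T A1 -> is_anchor N p T A2 -> (exists k, A1 k <> A2 k) ->
    (~ exists x, supp p T A1 x /\ supp p T A2 x) \/
    (exists S : {set 'I_d}, (d - 1 <= #|S|)%nat /\
       forall k, k \in S -> exists v1 v2,
         lkv p T k A1 v1 /\ lkv p T k A2 v2 /\ overlap v1 v2).

(* Main.v *)
Require Import Defs.
From Stdlib Require Import ZArith Reals Lia Lra Classical ClassicalEpsilon.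
From mathcomp Require Import all_boot zify.

Set Implicit Arguments.
Unset Strict Implicit.
Unset Printing Implicit Defensive.

Definition comp_ok (M : Z) (c : Defs.comp) : Prop :=
  match c with Pt n => (0 <= n /\ n <= M)%Z | Iv a b => (0 <= a /\ a < b /\ b <= M)%Z end.

Definition Inv d (N : 'I_d -> Z) (T : mesh d) : Prop :=
  forall E, T E -> forall k, comp_ok (N k) (E k).

Lemma adm_inv d (N : 'I_d -> Z) (p : 'I_d -> nat) T : admissible N p T -> Inv N T.
Proof.
elim=> [G HG | T0 Q j _ IH TQ cQ _ Hev].
- move=> E HE k; have := HE k; have [Hb _] := HG k.
  case: (E k) => [n | a b] /=.
  + by move/Hb.
  + move=> [Ga [Gb [ab _]]]; have := Hb _ Ga; have := Hb _ Gb; lia.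
- move=> E' [[HE' _] | [E [HE [_ [EQ [Hk Hj]]]]]]; first exact: IH.
  move=> k; case: (eqVneq k j) => [->{k} | kj]; last by rewrite Hk //; exact: IH.
  have := IH _ TQ j; have [a [b Qj]] := cQ j.
  move: Hev; rewrite Qj /= => Hev.
  have [m Hm] : exists m, (a + b = 2 * m)%Z.
    by exists ((a+b)/2)%Z; apply: Z_div_exact_full_2; [lia | rewrite Zmod_even Hev].
  have Hm2 : ((a + b) / 2 = m)%Z by rewrite Hm Z.mul_comm Z.div_mul.
  rewrite Qj /= Hm2 in Hj.
  move=> H; case: Hj => [->|[->|->]]; simpl in H |- *; lia.
Qed.
Definition memv (v : seq Z) (n : Z) : Prop :=
  exists r, (r < size v)%nat /\ nth 0%Z v r = n.

Lemma nondecr_mono xi i j : nondecr xi -> (i <= j)%nat -> (j < size xi)%nat ->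
  (nth 0%Z xi i <= nth 0%Z xi j)%Z.
Proof.
move=> H /subnKC <-; elim: (j - i) => [|t IH]; first by rewrite addn0; lia.
rewrite addnS => Ht; have := H (i + t) Ht; have := IH (ltnW Ht); lia.
Qed.

Lemma overlap_agree v1 v2 n : overlap v1 v2 -> (0 < size v2)%nat ->
  (nth 0%Z v2 0 <= n)%Z -> (n <= nth 0%Z v2 (size v2).-1)%Z ->
  memv v1 n -> memv v2 n.
Proof.
move=> [xi [k1 [k2 [Hnd [_ [Hs1 [Hs2 [E1 E2]]]]]]]] Hp Hlo Hhi [s [Hs Hn]]; subst n.
rewrite E1 // in Hlo Hhi |- *.
rewrite E2 // in Hlo; rewrite E2 ?prednK ?leqnn // in Hhi.
have Hsx : (s + k1 < size xi)%nat.
  by apply: leq_trans Hs1; rewrite addnC ltn_add2l.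
case: (ltnP (s + k1) k2) => h1.
  exists 0%nat; split => //; rewrite E2 //.
  have hk : (k2 < size xi)%nat.
    by apply: leq_trans Hs2; rewrite -{1}(addn0 k2) ltn_add2l.
  have := nondecr_mono Hnd (ltnW h1) hk; rewrite add0n in Hlo *; lia.
case: (ltnP ((size v2).-1 + k2) (s + k1)) => h2.
  exists (size v2).-1; split; first by rewrite prednK.
  rewrite E2 ?prednK //.
  have := nondecr_mono Hnd (ltnW h2) Hsx; lia.
exists (s + k1 - k2); split; first lia.
rewrite E2; last lia.
by congr nth; lia.
Qed.

Definition sinc (v : seq Z) : Prop :=
  forall i, (i.+1 < size v)%nat -> (nth 0%Z v i < nth 0%Z v i.+1)%Z.

Lemma sinc_nondecr v : sinc v -> nondecr v.
Proof. move=> H i Hi; have := H i Hi; lia. Qed.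

Lemma sinc_lt v i j : sinc v -> (i < j)%nat -> (j < size v)%nat ->
  (nth 0%Z v i < nth 0%Z v j)%Z.
Proof.
move=> H Hij Hj; have := H i (leq_ltn_trans Hij Hj).
have := nondecr_mono (sinc_nondecr H) Hij Hj; lia.
Qed.

Lemma sinc_between v r x : sinc v -> (r.+1 < size v)%nat ->
  (nth 0%Z v r < x)%Z -> (x < nth 0%Z v r.+1)%Z -> ~ memv v x.
Proof.
move=> H Hr H1 H2 [s [Hs Hx]]; subst x.
case: (leqP s r) => h.
  have := nondecr_mono (sinc_nondecr H) h (ltnW Hr); lia.
have := nondecr_mono (sinc_nondecr H) h Hs; lia.
Qed.

Lemma overlap_sym v1 v2 : overlap v1 v2 -> overlap v2 v1.
Proof.
move=> [xi [k1 [k2 [H1 [H2 [H3 [H4 [H5 H6]]]]]]]].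
exists xi, k2, k1; do !split => //; by rewrite maxnC.
Qed.

Lemma agree_overlap_asym v1 v2 : sinc v1 -> sinc v2 -> size v1 = size v2 ->
  (0 < size v1)%nat ->
  (nth 0%Z v1 0 <= nth 0%Z v2 0)%Z ->
  (nth 0%Z v2 0 <= nth 0%Z v1 (size v1).-1)%Z ->
  (forall n, (nth 0%Z v2 0 <= n)%Z -> (n <= nth 0%Z v1 (size v1).-1)%Z ->
     (n <= nth 0%Z v2 (size v2).-1)%Z -> (memv v1 n <-> memv v2 n)) ->
  overlap v1 v2.
Proof.
move=> s1 s2 Hsz Hp H0 Hlh Hag.
set L := size v1.
have Hl2 : (nth 0%Z v2 0 <= nth 0%Z v2 (size v2).-1)%Z.
  by apply: nondecr_mono (sinc_nondecr s2) _ _; lia.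
have [t [Ht Hvt]] : memv v1 (nth 0%Z v2 0).
  by apply/Hag; [lia | lia | lia | exists 0%nat; split => //; lia].
have Hcl : forall r, (t + r < L)%nat -> nth 0%Z v2 r = nth 0%Z v1 (t + r).
  elim=> [|r IH] Hr; first by rewrite addn0.
  have IH' : nth 0%Z v2 r = nth 0%Z v1 (t + r) by apply: IH; lia.
  have Hr2 : (r.+1 < size v2)%nat by rewrite -Hsz; lia.
  have Hr1 : ((t + r).+1 < size v1)%nat by rewrite -addnS.
  have m1 := s1 _ Hr1; have m2 := s2 _ Hr2.
  have e1 : (nth 0%Z v1 (t + r).+1 <= nth 0%Z v1 (size v1).-1)%Z.
    by apply: nondecr_mono (sinc_nondecr s1) _ _; lia.
  have e2 : (nth 0%Z v2 r.+1 <= nth 0%Z v2 (size v2).-1)%Z.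
    by apply: nondecr_mono (sinc_nondecr s2) _ _; lia.
  have e3 : (nth 0%Z v2 0 <= nth 0%Z v2 r)%Z.
    by apply: nondecr_mono (sinc_nondecr s2) _ _; lia.
  rewrite addnS.
  case: (Z.lt_trichotomy (nth 0%Z v1 (t + r).+1) (nth 0%Z v2 r.+1)) => [h|[h|h]].
  - exfalso; apply: (sinc_between s2 Hr2 (x := nth 0%Z v1 (t + r).+1)); try lia.
    apply/Hag; try lia; exists (t + r).+1; split => //.
  - by rewrite h.
  - exfalso; apply: (sinc_between s1 Hr1 (x := nth 0%Z v2 r.+1)); try lia.
    apply/Hag; try lia; exists r.+1; split => //.
pose xi := mkseq (fun i => if (i < t)%nat then nth 0%Z v1 i else nth 0%Z v2 (i - t)) (L + t).
have Hxi : forall i, (i < L + t)%nat -> nth 0%Z xi i =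
   (if (i < t)%nat then nth 0%Z v1 i else nth 0%Z v2 (i - t)).
  by move=> i Hi; rewrite nth_mkseq.
have Hsx : size xi = (L + t)%nat by rewrite size_mkseq.
exists xi, 0%nat, t; split; last split; last split; last split; last split.
- move=> i; rewrite Hsx => Hi; rewrite !Hxi; try lia.
  case: (ltnP i.+1 t) => h.
    rewrite (ltnW h); have := s1 i; rewrite /L in Hi; move=> X; have := X ltac:(lia); lia.
  case: (ltnP i t) => h'.
    have -> : i = t.-1 by lia.
    have -> : (t.-1.+1 - t = 0)%nat by lia.
    rewrite -Hvt; have := @sinc_lt v1 t.-1 t s1; move=> X.
    have := X ltac:(lia) ltac:(lia); lia.
  have -> : (i.+1 - t = (i - t).+1)%nat by lia.
  have := s2 (i - t)%nat; rewrite -Hsz; move=> X; have := X ltac:(rewrite /L in Hi; lia); lia.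
- rewrite Hsx -Hsz maxnn; lia.
- rewrite Hsx; lia.
- rewrite Hsx -Hsz; lia.
- move=> r Hr; rewrite addn0 Hxi; last lia.
  case: ifP => // h.
  rewrite Hcl; last lia.
  by congr nth; lia.
- move=> r Hr; rewrite Hxi; last (rewrite -Hsz in Hr; lia).
  have -> : (r + t < t)%nat = false by lia.
  by congr nth; lia.
Qed.

Lemma agree_overlap v1 v2 : sinc v1 -> sinc v2 -> size v1 = size v2 ->
  (0 < size v1)%nat ->
  (nth 0%Z v1 0 <= nth 0%Z v2 (size v2).-1)%Z ->
  (nth 0%Z v2 0 <= nth 0%Z v1 (size v1).-1)%Z ->
  (forall n, (nth 0%Z v1 0 <= n)%Z -> (nth 0%Z v2 0 <= n)%Z ->
     (n <= nth 0%Z v1 (size v1).-1)%Z ->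
     (n <= nth 0%Z v2 (size v2).-1)%Z -> (memv v1 n <-> memv v2 n)) ->
  overlap v1 v2.
Proof.
move=> s1 s2 Hsz Hp Ha Hb Hag.
case: (Z.le_gt_cases (nth 0%Z v1 0) (nth 0%Z v2 0)) => h.
  apply: agree_overlap_asym => // n h1 h2 h3; apply: Hag => //; lia.
apply: overlap_sym; apply: agree_overlap_asym => //; try lia.
all: try by rewrite -Hsz.
move=> n h1 h2 h3; symmetry; apply: Hag => //; lia.
Qed.

Lemma walk v n : sinc v -> (nth 0%Z v 0 <= n)%Z -> forall K, (K < size v)%nat ->
  memv v n \/ (exists r, (r.+1 < size v)%nat /\ (nth 0%Z v r < n)%Z /\
                         (n < nth 0%Z v r.+1)%Z) \/ (nth 0%Z v K < n)%Z.
Proof.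
move=> s h0; elim=> [|K IH] HK.
  case: (Z.le_gt_cases n (nth 0%Z v 0)) => h; last by right; right.
  left; exists 0%nat; split => //; lia.
case: (IH (ltnW HK)) => [H|[H|H]]; [by left | by right; left |].
case: (Z.lt_trichotomy n (nth 0%Z v K.+1)) => [h|[h|h]].
- by right; left; exists K; split => //; lia.
- by left; exists K.+1; split => //; lia.
- by right; right.
Qed.

Lemma hull_cases v n : sinc v -> (0 < size v)%nat ->
  (nth 0%Z v 0 <= n)%Z -> (n <= nth 0%Z v (size v).-1)%Z ->
  memv v n \/ (exists r, (r.+1 < size v)%nat /\ (nth 0%Z v r < n)%Z /\
                         (n < nth 0%Z v r.+1)%Z).
Proof.
move=> s hp h0 h1; case: (walk s h0 (K := (size v).-1)) => [|H|[H|H]]; try tauto.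
  by rewrite prednK.
lia.
Qed.

Section LKV.
Variables (d : nat) (p : 'I_d -> nat) (T : mesh d).

Lemma lkv_sinc j A v : lkv p T j A v -> sinc v.
Proof. by case=> _ [H _]. Qed.

Lemma lkv_size j A v : lkv p T j A v -> size v = (p j + 2)%nat.
Proof. by case. Qed.

Lemma lkv_mem j A v n : lkv p T j A v ->
  (nth 0%Z v 0 <= n)%Z -> (n <= nth 0%Z v (size v).-1)%Z ->
  (memv v n <-> inXi T j A n).
Proof.
move=> [Hs [Hi [Hx [Hb Hq]]]] h0 h1; split.
  by move=> [r [Hr <-]]; apply: Hx.
move=> HX; have hp : (0 < size v)%nat by rewrite Hs addn2.
case: (hull_cases Hi hp h0 h1) => // [[r [Hr [a b]]]].
by case: (Hb r Hr n (conj a b)).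
Qed.

Lemma lkv_uniq j A v w : lkv p T j A v -> lkv p T j A w -> v = w.
Proof.
move=> Hv Hw; have [Sv [Iv [Xv [Bv Qv]]]] := Hv; have [Sw [Iw [Xw [Bw Qw]]]] := Hw.
have Hsz : size v = size w by rewrite Sv Sw.
have Hq : (qn p j < size v)%nat by rewrite Sv /qn; apply: leq_ltn_trans (leq_div _ _) _; lia.
have step : forall r, (r.+1 < size v)%nat -> nth 0%Z v r = nth 0%Z w r ->
    nth 0%Z v r.+1 = nth 0%Z w r.+1.
  move=> r Hr E; have Hr' : (r.+1 < size w)%nat by rewrite -Hsz.
  have a1 := Iv r Hr; have a2 := Iw r Hr'.
  case: (Z.lt_trichotomy (nth 0%Z v r.+1) (nth 0%Z w r.+1)) => [h|[h|h]] //.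
    by case: (Bw r Hr' (nth 0%Z v r.+1)); [lia | apply: Xv].
  by case: (Bv r Hr (nth 0%Z w r.+1)); [lia | apply: Xw].
have stepd : forall r, (r.+1 < size v)%nat -> nth 0%Z v r.+1 = nth 0%Z w r.+1 ->
    nth 0%Z v r = nth 0%Z w r.
  move=> r Hr E; have Hr' : (r.+1 < size w)%nat by rewrite -Hsz.
  have a1 := Iv r Hr; have a2 := Iw r Hr'.
  case: (Z.lt_trichotomy (nth 0%Z v r) (nth 0%Z w r)) => [h|[h|h]] //.
    by case: (Bv r Hr (nth 0%Z w r)); [lia | apply: Xw; lia].
  by case: (Bw r Hr' (nth 0%Z v r)); [lia | apply: Xv; lia].
have up : forall t, (qn p j + t < size v)%nat -> nth 0%Z v (qn p j + t) = nth 0%Z w (qn p j + t).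
  elim=> [|t IH] Ht; first by rewrite addn0 Qv Qw.
  rewrite addnS; apply: step; first by rewrite -addnS.
  by apply: IH; lia.
have down : forall t, (t <= qn p j)%nat -> nth 0%Z v (qn p j - t) = nth 0%Z w (qn p j - t).
  elim=> [|t IH] Ht; first by rewrite subn0 Qv Qw.
  have E : (qn p j - t = (qn p j - t.+1).+1)%nat by lia.
  apply: stepd; first by rewrite -E; lia.
  by rewrite -E; apply: IH; lia.
apply: (eq_from_nth (x0 := 0%Z)) => // r Hr.
case: (leqP (qn p j) r) => h.
  by rewrite -(subnKC h); apply: up; rewrite subnKC.
have -> : r = (qn p j - (qn p j - r))%nat by lia.
by apply: down; lia.
Qed.

End LKV.

Section Bounds.
Variables (d : nat) (N : 'I_d -> Z) (p : 'I_d -> nat) (T : mesh d).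
Hypothesis HI : Inv N T.

Lemma anchor_comp A : is_anchor N p T A -> forall l,
  (exists c, A l = Pt c) \/ (exists a b, A l = Iv a b /\ (a < b)%Z).
Proof.
move=> [[Q [TQ [cQ HA]]] _] l; have := HA l; case: (odd (p l)).
  by case=> ->; left; eexists.
move=> ->; have [a [b E]] := cQ l; right; exists a, b; split => //.
by have := HI TQ l; rewrite E /=; lia.
Qed.

Lemma inXi_bound A j n : is_anchor N p T A -> inXi T j A n -> (0 <= n /\ n <= N j)%Z.
Proof.
move=> HA HX.
pose y : point d := fun k => if k == j then IZR n else
   match A k with Pt c => IZR c | Iv a b => Rdiv (Rplus (IZR a) (IZR b)) (IZR 2) end.
have Hy : entS (Pjn A j n) y.
  move=> k; rewrite /Pjn /y; case: eqP => // _.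
  case: (anchor_comp HA k) => [[c ->] | [a [b [-> ab]]]] //=.
  have := IZR_lt _ _ ab; lra.
have [Q [TQ [_ [HQ _]]]] := HX y Hy.
have := HQ j; have := HI TQ j; rewrite /y eqxx.
case: (Q j) => [c | a b] /=.
  by move=> H /eq_IZR ->.
move=> H [/le_IZR h1 /le_IZR h2]; lia.
Qed.

Lemma supp_Omega A x : is_anchor N p T A -> supp p T A x -> OmegaCl N x.
Proof.
move=> HA HS k; have [v [Hv [h1 h2]]] := HS k.
have [Sv [_ [Xv _]]] := Hv.
have b0 := inXi_bound HA (Xv 0%nat ltac:(rewrite Sv; lia)).
have b1 := inXi_bound HA (Xv (size v).-1 ltac:(rewrite Sv; lia)).
have := IZR_le _ _ (proj1 b0); have := IZR_le _ _ (proj2 b1); lra.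
Qed.

End Bounds.

Lemma inXi_ext d (T : mesh d) A B j n : (forall k, A k = B k) -> inXi T j A n -> inXi T j B n.
Proof.
move=> E H x Hx; apply: H => k; have := Hx k; rewrite /Pjn; case: eqP => // _.
by rewrite E.
Qed.

Lemma ov_same d (p : 'I_d -> nat) (T : mesh d) A B k v w v' w' n :
  lkv p T k A v -> lkv p T k B w -> lkv p T k A v' -> lkv p T k B w' ->
  overlap v' w' ->
  (nth 0%Z v 0 <= n)%Z -> (n <= nth 0%Z v (size v).-1)%Z ->
  (nth 0%Z w 0 <= n)%Z -> (n <= nth 0%Z w (size w).-1)%Z ->
  (inXi T k A n <-> inXi T k B n).
Proof.
move=> Hv Hw Hv' Hw'; rewrite -(lkv_uniq Hv Hv') -(lkv_uniq Hw Hw') => Ho a b c e.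
have pv : (0 < size v)%nat by rewrite (lkv_size Hv) addn2.
have pw : (0 < size w)%nat by rewrite (lkv_size Hw) addn2.
rewrite -(lkv_mem Hv a b) -(lkv_mem Hw c e); split.
  exact: overlap_agree.
exact: overlap_agree (overlap_sym Ho) pv a b.
Qed.

Lemma hull_of_supp d (p : 'I_d -> nat) (T : mesh d) A x k n v :
  supp p T A x -> x k = IZR n -> lkv p T k A v ->
  (nth 0%Z v 0 <= n)%Z /\ (n <= nth 0%Z v (size v).-1)%Z.
Proof.
move=> HS Hx Hv; have [v' [Hv' [h1 h2]]] := HS k.
rewrite (lkv_uniq Hv Hv'); rewrite Hx in h1 h2.
by split; apply: le_IZR.
Qed.

Lemma card_two d (S : {set 'I_d}) i j : i != j -> i \notin S -> j \notin S ->
  (#|S| + 2 <= d)%nat.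
Proof.
move=> hij hi hj.
have sub : S \subset ~: [set i; j].
  apply/subsetP => k kS; rewrite !inE; apply/negP => /orP [] /eqP E; subst k.
    by rewrite kS in hi.
  by rewrite kS in hj.
have := subset_leq_card sub; have := cardsC [set i; j]; rewrite cards2 hij card_ord.
lia.
Qed.

Lemma sdc_two d (hd : (2 <= d)%nat) N p (T : mesh d) (Hs : SDC N p T) A B x i j n m :
  i != j -> is_anchor N p T A -> is_anchor N p T B -> supp p T A x -> supp p T B x ->
  x i = IZR n -> x j = IZR m ->
  ~ (inXi T i A n <-> inXi T i B n) -> ~ (inXi T j A m <-> inXi T j B m) -> False.
Proof.
move=> hij hA hB SA SB xi xj Di Dj.
have hne : exists k, A k <> B k.
  apply: NNPP => H; apply: Di.
  have E : forall k, A k = B k by move=> k; apply: NNPP => H'; apply: H; exists k.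
  split; apply: inXi_ext => // k; by rewrite E.
case: (Hs A B hA hB hne) => [Hn | [S [HS HSk]]].
  by apply: Hn; exists x.
have Hin : forall k c, k \in S -> x k = IZR c -> (inXi T k A c <-> inXi T k B c).
  move=> k c kS xk; have [v1 [v2 [l1 [l2 ov]]]] := HSk k kS.
  have [a b] := hull_of_supp SA xk l1; have [c' e] := hull_of_supp SB xk l2.
  exact: (ov_same l1 l2 l1 l2 ov a b c' e).
case: (boolP (i \in S)) => hi; first by apply: Di; apply: Hin.
case: (boolP (j \in S)) => hj; first by apply: Dj; apply: Hin.
have := card_two hij hi hj; lia.
Qed.

Lemma sdc_one d (hd : (2 <= d)%nat) N p (T : mesh d) (Hs : SDC N p T) A B x i j n m :
  i != j -> is_anchor N p T A -> is_anchor N p T B -> supp p T A x -> supp p T B x ->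
  x i = IZR n -> x j = IZR m ->
  ~ (inXi T i A n <-> inXi T i B n) -> (inXi T j A m <-> inXi T j B m).
Proof.
move=> hij hA hB SA SB xi xj Di; apply: NNPP => Dj.
exact: (sdc_two hd Hs hij hA hB SA SB xi xj Di Dj).
Qed.

Lemma sdc_aas d (hd : (2 <= d)%nat) N p (T : mesh d) : SDC N p T -> AAS N p T.
Proof.
move=> Hs i j hij n m _ _ x [[[_ xi] [[A1 [a1 [X1 S1]]] [A2 [a2 [X2 S2]]]]]
                              [[_ xj] [[A3 [a3 [X3 S3]]] [A4 [a4 [X4 S4]]]]]].
have hji : j != i by rewrite eq_sym.
have D12 : ~ (inXi T i A1 n <-> inXi T i A2 n) by tauto.
have D34 : ~ (inXi T j A3 m <-> inXi T j A4 m) by tauto.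
have E12 := sdc_one hd Hs hij a1 a2 S1 S2 xi xj D12.
have E34 := sdc_one hd Hs hji a3 a4 S3 S4 xj xi D34.
case: (classic (inXi T i A3 n)) => b; case: (classic (inXi T j A1 m)) => c.
- apply: (sdc_two hd Hs hij a2 a4 S2 S4 xi xj); tauto.
- apply: (sdc_two hd Hs hij a2 a3 S2 S3 xi xj); tauto.
- apply: (sdc_two hd Hs hij a1 a4 S1 S4 xi xj); tauto.
- apply: (sdc_two hd Hs hij a1 a3 S1 S3 xi xj); tauto.
Qed.

Definition pb (P : Prop) : bool := if excluded_middle_informative P then true else false.

Lemma pbP (P : Prop) : pb P = true <-> P.
Proof. by rewrite /pb; case: excluded_middle_informative. Qed.

Lemma nonov d (p : 'I_d -> nat) (T : mesh d) A1 A2 y k :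
  supp p T A1 y -> supp p T A2 y ->
  ~ (exists v1 v2, lkv p T k A1 v1 /\ lkv p T k A2 v2 /\ overlap v1 v2) ->
  exists n, (forall v, lkv p T k A1 v ->
               (nth 0%Z v 0 <= n)%Z /\ (n <= nth 0%Z v (size v).-1)%Z) /\
            (forall v, lkv p T k A2 v ->
               (nth 0%Z v 0 <= n)%Z /\ (n <= nth 0%Z v (size v).-1)%Z) /\
            ~ (inXi T k A1 n <-> inXi T k A2 n).
Proof.
move=> S1 S2 Hno.
have [v1 [l1 [a1 b1]]] := S1 k; have [v2 [l2 [a2 b2]]] := S2 k.
have nov : ~ overlap v1 v2 by move=> ov; apply: Hno; exists v1, v2.
have sz : size v1 = size v2 by rewrite (lkv_size l1) (lkv_size l2).
have pv : (0 < size v1)%nat by rewrite (lkv_size l1) addn2.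
have h1 : (nth 0%Z v1 0 <= nth 0%Z v2 (size v2).-1)%Z by apply: le_IZR; lra.
have h2 : (nth 0%Z v2 0 <= nth 0%Z v1 (size v1).-1)%Z by apply: le_IZR; lra.
have : ~ (forall n, (nth 0%Z v1 0 <= n)%Z -> (nth 0%Z v2 0 <= n)%Z ->
     (n <= nth 0%Z v1 (size v1).-1)%Z ->
     (n <= nth 0%Z v2 (size v2).-1)%Z -> (memv v1 n <-> memv v2 n)).
  move=> H; apply: nov; exact: agree_overlap (lkv_sinc l1) (lkv_sinc l2) sz pv h1 h2 H.
move=> /not_all_ex_not [n Hn].
have [c1 [c2 [c3 [c4 Hm]]]] : (nth 0%Z v1 0 <= n)%Z /\ (nth 0%Z v2 0 <= n)%Z /\
     (n <= nth 0%Z v1 (size v1).-1)%Z /\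
     (n <= nth 0%Z v2 (size v2).-1)%Z /\ ~ (memv v1 n <-> memv v2 n) by tauto.
exists n; split; last split.
- by move=> v lv; rewrite (lkv_uniq lv l1).
- by move=> v lv; rewrite (lkv_uniq lv l2).
- by rewrite -(lkv_mem l1 c1 c3) -(lkv_mem l2 c2 c4).
Qed.

Lemma supp_upd d (p : 'I_d -> nat) (T : mesh d) A y k n :
  supp p T A y ->
  (forall v, lkv p T k A v -> (nth 0%Z v 0 <= n)%Z /\ (n <= nth 0%Z v (size v).-1)%Z) ->
  supp p T A (fun l => if l == k then IZR n else y l).
Proof.
move=> S H l; case: eqP => [->|_]; last exact: S.
have [v [lv _]] := S k; exists v; split => //.
have [a b] := H v lv; split; exact: IZR_le.
Qed.

Lemma aas_sdc d (hd : (2 <= d)%nat) N p (T : mesh d) : Inv N T -> AAS N p T -> SDC N p T.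
Proof.
move=> HI Ha A1 A2 hA1 hA2 _.
case: (classic (exists x, supp p T A1 x /\ supp p T A2 x)) => [[y [Sy1 Sy2]] | H];
  last by left.
right.
pose P k := exists v1 v2, lkv p T k A1 v1 /\ lkv p T k A2 v2 /\ overlap v1 v2.
exists [set k | pb (P k)]; split; last first.
  by move=> k; rewrite inE => /pbP.
case: (leqP (d - 1) #|[set k | pb (P k)]|) => // hlt; exfalso.
move: hlt; set S := [set k | pb (P k)] => hlt.
have : (1 < #|~: S|)%nat by have := cardsC S; rewrite card_ord; lia.
move=> /card_gt1P [i [j [hi hj hij]]].
have nPi : ~ P i by move=> Pi; move: hi; rewrite !inE; move/negP; apply; apply/pbP.
have nPj : ~ P j by move=> Pj; move: hj; rewrite !inE; move/negP; apply; apply/pbP.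
have [n [Hn1 [Hn2 Dn]]] := nonov Sy1 Sy2 nPi.
pose y' := fun l => if l == i then IZR n else y l.
have S1' := supp_upd Sy1 Hn1; have S2' := supp_upd Sy2 Hn2.
have [m [Hm1 [Hm2 Dm]]] := nonov S1' S2' nPj.
pose x := fun l => if l == j then IZR m else y' l.
have Sx1 : supp p T A1 x := supp_upd S1' Hm1.
have Sx2 : supp p T A2 x := supp_upd S2' Hm2.
have Om : OmegaCl N x := supp_Omega HI hA1 Sx1.
have xi : x i = IZR n by rewrite /x /y' (negbTE hij) eqxx.
have xj : x j = IZR m by rewrite /x eqxx.
have bi : (0 <= n /\ n <= N i)%Z.
  by have [h1 h2] := Om i; rewrite xi in h1 h2; split; apply: le_IZR.
have bj : (0 <= m /\ m <= N j)%Z.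
  by have [h1 h2] := Om j; rewrite xj in h1 h2; split; apply: le_IZR.
apply: (Ha i j hij n m bi bj x); split.
  split; first by split.
  case: (classic (inXi T i A1 n)) => c.
    by split; [exists A1 | exists A2]; do !split => //; tauto.
  by split; [exists A2 | exists A1]; do !split => //; tauto.
split; first by split.
case: (classic (inXi T j A1 m)) => c.
  by split; [exists A1 | exists A2]; do !split => //; tauto.
by split; [exists A2 | exists A1]; do !split => //; tauto.
Qed.

Theorem theorem6p1 (d : nat) (hd : (2 <= d)%nat) (N : 'I_d -> Z)
  (hN : forall k, (1 <= N k)%Z) (p : 'I_d -> nat) (T : mesh d) :
  admissible N p T -> (AAS N p T <-> SDC N p T).
Proof.
move=> Had; have HI := adm_inv Had; split.
  exact: aas_sdc.
exact: sdc_aas.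
Qed.
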